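(* Let $A$ be an integral domain with field of fractions $K$. Every sublocalization over $A$ is a localization of $A$ if and only if for each $x\in K\setminus A$ the ideal $\sqrt{(A:_A x)}$ is the radical of a principal ideal. Moreover, if each principal ideal of $A$ has only finitely many associated primes, then every sublocalization over $A$ is a localization of $A$ if and only if each associated prime of a principal ideal of $A$ is the radical of a principal ideal.
   Context: $(A:_A x)=\{a\in A: ax\in A\}$. An overring of $A$ is a subring of $K$ containing $A$; it is a localization of $A$ if it equals $S^{-1}A$ for a multiplicatively closed set $S$ of nonzero elements of $A$, and a sublocalization over $A$ if it is an intersection of localizations of $A$. A prime $P$ of $A$ is an associated prime of an ideal $I$ if there is $a\in A$ such that $P$ is a minimal prime over $(I:_A a)=\{r\in A: ra\in I\}$. *)

(* Defs.v *)
From HB Require Import structures.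
From mathcomp Require Import all_boot all_order all_algebra fraction.
Set Implicit Arguments. Unset Strict Implicit. Unset Printing Implicit Defensive.
Import GRing.Theory.
Local Open Scope ring_scope.

Section Defs.
Variable A : idomainType.
Local Notation K := {fraction A}.

Definition inA (x : K) : Prop := exists a : A, x = tofrac a.

Definition colonA (x : K) : A -> Prop := fun a => inA (tofrac a * x).

Definition mult_closed_nz (S : A -> Prop) : Prop :=
  S 1 /\ (forall s t, S s -> S t -> S (s * t)) /\ ~ S 0.

Definition locset (S : A -> Prop) : K -> Prop :=
  fun x => exists a s, S s /\ x = tofrac a / tofrac s.

Definition is_localization (B : K -> Prop) : Prop :=
  exists S, mult_closed_nz S /\ forall x, B x <-> locset S x.

Definition is_sublocalization (B : K -> Prop) : Prop :=
  exists F : (K -> Prop) -> Prop,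
    (forall C, F C -> is_localization C) /\
    forall x, B x <-> (forall C, F C -> C x).

Definition principal (b : A) : A -> Prop := fun a => exists c, a = c * b.

Definition radical (I : A -> Prop) : A -> Prop := fun a => exists n, I (a ^+ n).

Definition same_ideal (I J : A -> Prop) : Prop := forall a, I a <-> J a.

Definition is_ideal (I : A -> Prop) : Prop :=
  I 0 /\ (forall a b, I a -> I b -> I (a + b)) /\ (forall r a, I a -> I (r * a)).

Definition is_prime_ideal (P : A -> Prop) : Prop :=
  is_ideal P /\ ~ P 1 /\ (forall a b, P (a * b) -> P a \/ P b).

Definition colon_ideal (I : A -> Prop) (a : A) : A -> Prop := fun r => I (r * a).

Definition minimal_prime_over (J P : A -> Prop) : Prop :=
  is_prime_ideal P /\ (forall a, J a -> P a) /\
  (forall Q, is_prime_ideal Q -> (forall a, J a -> Q a) ->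
     (forall a, Q a -> P a) -> forall a, P a -> Q a).

Definition associated_prime (I P : A -> Prop) : Prop :=
  exists a, minimal_prime_over (colon_ideal I a) P.

Definition finitely_many_assoc (I : A -> Prop) : Prop :=
  exists (n : nat) (Ps : nat -> A -> Prop),
    forall P, associated_prime I P -> exists i, (i < n)%N /\ same_ideal P (Ps i).

End Defs.

(* Main.v *)
Require Import Defs.
From HB Require Import structures.
From mathcomp Require Import all_boot all_order all_algebra fraction generic_quotient.
From mathcomp Require Import ring.
From mathcomp Require boolp classical_sets.
From Stdlib Require Import Classical_Prop.
Import GRing.Theory.
Local Open Scope ring_scope.
Set Implicit Arguments. Unset Strict Implicit.

Lemma zorn_gen (U : Type) (G : U -> Prop) (le : U -> U -> Prop) (x0 : U) :
  G x0 -> (forall x, le x x) -> (forall x y z, le x y -> le y z -> le x z) ->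
  (forall F : U -> Prop, (forall X, F X -> G X) -> (exists X, F X) ->
     (forall X Y, F X -> F Y -> le X Y \/ le Y X) ->
     exists B, G B /\ forall X, F X -> le X B) ->
  exists M, G M /\ forall Y, G Y -> le M Y -> le Y M.
Proof.
move=> Gx0 lerefl letr chainP.
pose T := {x : U | G x}.
pose R := fun a b : T => boolp.asbool (le (sval a) (sval b)).
have [[M GM] HM] : exists t, classical_sets.premaximal R t.
  apply: (@classical_sets.ZL_preorder T (exist _ x0 Gx0) R).
- by move=> t; apply/boolp.asboolP.
- by move=> r s t /boolp.asboolP h1 /boolp.asboolP h2; apply/boolp.asboolP; exact: letr h2.
- move=> Ac Atot.
  case: (classic (exists s, Ac s)) => [[s0 As0]|nA]; last first.
    by exists (exist _ x0 Gx0) => s As; exfalso; apply: nA; exists s.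
  have [B [GB HB]] : exists B, G B /\ forall X, (exists s, Ac s /\ sval s = X) -> le X B.
    apply: chainP.
  + by move=> X [s [_ <-]]; exact: (svalP s).
  + by exists (sval s0), s0.
  + move=> X Y [s [As <-]] [t [At <-]].
    by case: (Atot s t As At) => /boolp.asboolP h; [left|right].
  exists (exist _ B GB) => s As; apply/boolp.asboolP; apply: HB; by exists s.
exists M; split => // Y GY leMY.
have := HM (exist _ Y GY); rewrite /R /=.
by move=> /(_ (introT (boolp.asboolP _) leMY)) /boolp.asboolP.
Qed.

Lemma prime_avoid (A : idomainType) (J M : A -> Prop) :
  is_ideal J -> M 1 -> (forall s t, M s -> M t -> M (s * t)) ->
  (forall a, J a -> ~ M a) ->
  exists Q, is_prime_ideal Q /\ (forall a, J a -> Q a) /\ (forall a, Q a -> ~ M a).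
Proof.
move=> [J0 [JD JM]] M1 MM JnM.
pose G := fun Q : A -> Prop => is_ideal Q /\ (forall a, J a -> Q a) /\ (forall a, Q a -> ~ M a).
have [Q [[[Q0 [QD QM]] [JQ QnM]] Qmax]] :
    exists Q, G Q /\ forall Y, G Y -> (forall a, Q a -> Y a) -> (forall a, Y a -> Q a).
  apply: (@zorn_gen _ G (fun X Y => forall a, X a -> Y a) J).
  - by split; [split|split].
  - by [].
  - by move=> X Y Z h1 h2 a /h1 /h2.
  - move=> F FG [X0 FX0] Fch.
    exists (fun z => exists X, F X /\ X z); split; last by move=> X FX a Xa; exists X.
    split; [split; [|split]|split].
    + by exists X0; split => //; case: (FG _ FX0) => [[]].
    + move=> a b [X [FX Xa]] [Y [FY Yb]].
      case: (Fch X Y FX FY) => h.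
      * exists Y; split => //; case: (FG _ FY) => [[_ [D _]] _]; exact: D (h _ Xa) Yb.
      * exists X; split => //; case: (FG _ FX) => [[_ [D _]] _]; exact: D Xa (h _ Yb).
    + move=> r a [X [FX Xa]]; exists X; split => //.
      by case: (FG _ FX) => [[_ [_ Mu]] _]; apply: Mu.
    + by move=> a Ja; exists X0; split => //; case: (FG _ FX0) => _ [h _]; apply: h.
    + move=> a [X [FX Xa]]; case: (FG _ FX) => _ [_ h]; exact: h.
exists Q; split; last by split.
split; first by split.
split; first by move=> Q1; exact: QnM Q1 M1.
move=> a b Qab; apply: NNPP => nab.
have nQa : ~ Q a by move=> h; apply: nab; left.
have nQb : ~ Q b by move=> h; apply: nab; right.
have ext : forall c, ~ Q c -> exists q r, Q q /\ M (q + r * c).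
  move=> c nQc; apply: NNPP => hn.
  pose Qc := fun z => exists q r, Q q /\ z = q + r * c.
  have GQc : G Qc.
    split; [split; [|split]|split].
    - by exists 0, 0; split => //; rewrite !mul0r addr0.
    - move=> x y [q1 [r1 [Q1 ->]]] [q2 [r2 [Q2 ->]]].
      exists (q1 + q2), (r1 + r2); split; first exact: QD.
      by rewrite mulrDl; ring.
    - move=> r x [q1 [r1 [Q1 ->]]]; exists (r * q1), (r * r1); split; first exact: QM.
      by rewrite mulrDr mulrA.
    - by move=> x Jx; exists x, 0; split; [exact: JQ|rewrite mul0r addr0].
    - move=> x [q [r [Qq ->]]] Mx; apply: hn; by exists q, r.
  have : Qc c by exists 0, 1; split => //; rewrite mul1r add0r.
  move/(Qmax Qc GQc (fun x Qx => ex_intro _ x (ex_intro _ 0 (conj Qx (esym (eqP (etrans (congr1 (fun t => x + t == x) (mul0r c)) (introT eqP (addr0 x))))))))).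
  done.
have [q1 [r1 [Q1 M1']]] := ext a nQa.
have [q2 [r2 [Q2 M2']]] := ext b nQb.
have := MM _ _ M1' M2'.
have -> : (q1 + r1 * a) * (q2 + r2 * b) = (q2 + r2 * b) * q1 + ((r1 * a) * q2 + (r1 * r2) * (a * b)) by ring.
apply: (QnM); apply: (QD); first exact: QM.
apply: (QD); exact: QM.
Qed.

Lemma prime_pow (A : idomainType) (Q : A -> Prop) y n :
  is_prime_ideal Q -> Q (y ^+ n) -> Q y.
Proof.
move=> [[Q0 [QD QM]] [Q1 QP]]; elim: n => [|n IH]; first by rewrite expr0.
by rewrite exprS => /QP [].
Qed.

Lemma pow_mult (A : idomainType) (y : A) :
  let M := fun z => exists n, z = y ^+ n in
  M 1 /\ (forall s t, M s -> M t -> M (s * t)).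
Proof.
split; first by exists 0%N; rewrite expr0.
by move=> s t [m ->] [n ->]; exists (m + n)%N; rewrite exprD.
Qed.

Lemma min_prime_avoid (A : idomainType) (I : A -> Prop) (y : A) :
  is_ideal I -> (forall n, ~ I (y ^+ n)) ->
  exists Q, minimal_prime_over I Q /\ ~ Q y.
Proof.
move=> Iid nI.
have [M1 MM] := pow_mult y.
have InM : forall a, I a -> ~ (exists n, a = y ^+ n).
  by move=> a Ia [n e]; apply: (nI n); rewrite -e.
have [Q0 [Q0p [IQ0 Q0n]]] := prime_avoid Iid M1 MM InM.
pose G := fun Q : A -> Prop => is_prime_ideal Q /\ (forall a, I a -> Q a) /\ ~ Q y.
have [Q [[Qp [IQ nQy]] Qmin]] :
    exists Q, G Q /\ forall Y, G Y -> (forall a, Y a -> Q a) -> (forall a, Q a -> Y a).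
  apply: (@zorn_gen _ G (fun X Y => forall a, Y a -> X a) Q0).
  - split => //; split => // h; apply: (Q0n y h); exists 1%N; by rewrite expr1.
  - by [].
  - by move=> X Y Z h1 h2 a /h2 /h1.
  - move=> F FG [X0 FX0] Fch.
    exists (fun z => forall X, F X -> X z); split; last by move=> X FX a; apply.
    split; [split; [split; [|split]|split]|split].
    + by move=> X /FG [[[]]].
    + by move=> a b Ha Hb X FX; case: (FG _ FX) => [[[_ [D _]] _] _]; apply: D; [apply: Ha|apply: Hb].
    + by move=> r a Ha X FX; case: (FG _ FX) => [[[_ [_ Mu]] _] _]; apply: Mu; apply: Ha.
    + by move=> H1; case: (FG _ FX0) => [[_ [n1 _]] _]; apply: n1; apply: H1.
    + move=> a b Hab; apply: NNPP => nab.
      have [X1 [FX1 nX1]] : exists X, F X /\ ~ X a.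
        by apply: NNPP => h; apply: nab; left => X FX; apply: NNPP => nx; apply: h; exists X.
      have [X2 [FX2 nX2]] : exists X, F X /\ ~ X b.
        by apply: NNPP => h; apply: nab; right => X FX; apply: NNPP => nx; apply: h; exists X.
      case: (FG _ FX1) => [[_ [_ P1]] _]; case: (FG _ FX2) => [[_ [_ P2]] _].
      case: (Fch _ _ FX1 FX2) => h.
      * by case: (P2 _ _ (Hab _ FX2)) => // /h.
      * by case: (P1 _ _ (Hab _ FX1)) => // /h.
    + by move=> a Ia X /FG [_ [h _]]; apply: h.
    + by move=> H; case: (FG _ FX0) => _ [_ h]; apply: h; apply: H.
exists Q; split => //; split => //; split => // Q' Q'p IQ' Q'Q.
apply: Qmin => //; split => //; split => // hy; apply: nQy; exact: Q'Q.
Qed.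

Lemma min_prime_local (A : idomainType) (J Q : A -> Prop) (y : A) :
  is_ideal J -> minimal_prime_over J Q -> Q y ->
  exists s m, ~ Q s /\ J (y ^+ m * s).
Proof.
move=> Jid [Qp [JQ Qmin]] Qy; apply: NNPP => hn.
pose M := fun z => exists m s, ~ Q s /\ z = y ^+ m * s.
have M1 : M 1 by exists 0%N, 1; split; [case: Qp => _ []|rewrite expr0 mulr1].
have MM : forall s t, M s -> M t -> M (s * t).
  move=> _ _ [m [s [ns ->]]] [m' [s' [ns' ->]]]; exists (m + m')%N, (s * s'); split.
    by case: Qp => _ [_ P] /P [].
  by rewrite exprD; ring.
have JnM : forall a, J a -> ~ M a.
  by move=> a Ja [m [s [ns e]]]; apply: hn; exists s, m; split => //; rewrite -e.
have [Q0 [Q0p [JQ0 Q0n]]] := prime_avoid Jid M1 MM JnM.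
have Q0Q : forall a, Q0 a -> Q a.
  move=> a Q0a; apply: NNPP => nQa; apply: (Q0n a Q0a); exists 0%N, a; split => //.
  by rewrite expr0 mul1r.
apply: (Q0n y (Qmin Q0 Q0p JQ0 Q0Q y Qy)); exists 1%N, 1; split.
  by case: Qp => _ [].
by rewrite expr1 mulr1.
Qed.

Lemma frac_decomp (A : idomainType) (x : {fraction A}) :
  exists a d : A, d != 0 /\ x = tofrac a / tofrac d.
Proof.
elim/quotW: x => r.
exists (\n_r), (\d_r); split; first exact: denom_ratioP.
apply: (@mulIf _ (tofrac \d_r)); first by rewrite tofrac_eq0 denom_ratioP.
rewrite divfK ?tofrac_eq0 ?denom_ratioP //.
rewrite -[_ * _]/(FracField.mul _ _) !piE.
apply/eqmodP; rewrite /= FracField.equivfE.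
by rewrite !numden_Ratio ?(oner_eq0, mulf_neq0, denom_ratioP) // !mulr1 mulrC.
Qed.

Lemma tofrac_inj (A : idomainType) (a b : A) : tofrac a = tofrac b -> a = b.
Proof. by move/eqP; rewrite tofrac_eq => /eqP. Qed.

Lemma tofrac_neq0 (A : idomainType) (d : A) : d != 0 -> tofrac d != 0 :> {fraction A}.
Proof. by rewrite tofrac_eq0. Qed.

Lemma colonA_frac (A : idomainType) (a d r : A) : d != 0 ->
  colonA (tofrac a / tofrac d) r <-> colon_ideal (principal d) a r.
Proof.
move=> d0; have dF := tofrac_neq0 d0; split.
- move=> [e He]; exists e; apply: tofrac_inj.
  by rewrite !tofracM -He mulrA divfK.
- move=> [c Hc]; exists c.
  by rewrite mulrA -tofracM Hc tofracM mulfK.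
Qed.

Lemma pow_neq0 (A : idomainType) (y : A) n : y != 0 -> y ^+ n != 0.
Proof. by move=> y0; rewrite expf_neq0. Qed.

Lemma mcnz_pow (A : idomainType) (S : A -> Prop) s n :
  mult_closed_nz S -> S s -> S (s ^+ n).
Proof.
move=> [S1 [SM _]] Ss; elim: n => [|n IH]; first by rewrite expr0.
by rewrite exprS; apply: SM.
Qed.

Lemma mcnz_neq0 (A : idomainType) (S : A -> Prop) s :
  mult_closed_nz S -> S s -> s != 0.
Proof. by move=> [_ [_ S0]] Ss; apply/eqP => e; apply: S0; rewrite -e. Qed.

Lemma locset_mul (A : idomainType) (S : A -> Prop) x y :
  mult_closed_nz S -> locset S x -> locset S y -> locset S (x * y).
Proof.
move=> [S1 [SM S0]] [a [s [Ss ->]]] [b [t [St ->]]].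
exists (a * b), (s * t); split; first exact: SM.
by rewrite !tofracM invfM; ring.
Qed.

Lemma locset_A (A : idomainType) (S : A -> Prop) a :
  mult_closed_nz S -> locset S (tofrac a).
Proof. by move=> [S1 _]; exists a, 1; split => //; rewrite tofrac1 invr1 mulr1. Qed.

Lemma locset_inv (A : idomainType) (S : A -> Prop) s :
  S s -> locset S (tofrac s)^-1.
Proof. by move=> Ss; exists 1, s; split => //; rewrite tofrac1 mul1r. Qed.

Lemma C1_SL (A : idomainType) :
  (forall x : {fraction A}, ~ inA x ->
      exists b : A, same_ideal (radical (colonA x)) (radical (principal b))) ->
  forall B : {fraction A} -> Prop, is_sublocalization B -> is_localization B.
Proof.
move=> C1 B [F [Floc HB]].
have Bmul : forall x y, B x -> B y -> B (x * y).
  move=> x y /HB Bx /HB By; apply/HB => C FC.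
  have [S [Smc HC]] := Floc C FC.
  by apply/HC; apply: locset_mul => //; apply/HC; [apply: Bx|apply: By].
have BA : forall a, B (tofrac a).
  move=> a; apply/HB => C FC; have [S [Smc HC]] := Floc C FC.
  by apply/HC; apply: locset_A.
pose T := fun t : A => t != 0 /\ B (tofrac t)^-1.
have T1 : T 1 by split; [exact: oner_neq0|rewrite tofrac1 invr1 -tofrac1; exact: BA].
exists T; split.
  split => //; split; last by case; rewrite eqxx.
  move=> s t [s0 Bs] [t0 Bt]; split; first exact: mulf_neq0.
  by rewrite tofracM invfM; apply: Bmul.
move=> x; split; last first.
  by move=> [a [t [[t0 Bt] ->]]]; apply: Bmul.
move=> Bx; case: (classic (inA x)) => [[a ->]|nx].
  by exists a, 1; split => //; rewrite tofrac1 invr1 mulr1.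
have [b Hb] := C1 x nx.
have [a [d [d0 ex]]] := frac_decomp x.
have dI : colonA x d by exists a; rewrite ex mulrC divfK // tofrac_neq0.
have [n [c Hc]] : radical (principal b) d by apply/Hb; exists 1%N; rewrite expr1.
have b0 : b != 0.
  apply/eqP => e; move: Hc; rewrite e mulr0 => /eqP; rewrite expf_eq0 => /andP [_].
  by apply/negP.
have [m [e He]] : radical (colonA x) b by apply/Hb; exists 1%N, 1; rewrite expr1 mul1r.
exists e, (b ^+ m); split; last first.
  by rewrite -He [tofrac _ * x]mulrC mulfK // tofrac_neq0 // pow_neq0.
split; first exact: pow_neq0.
apply/HB => C FC; have [S [Smc HC]] := Floc C FC; apply/HC.
have [a' [s [Ss xe]]] := (HC x).1 ((HB x).1 Bx C FC).
have s0 := mcnz_neq0 Smc Ss.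
have sI : colonA x s by exists a'; rewrite xe mulrC divfK // tofrac_neq0.
have [k [c' Hc']] : radical (principal b) s by apply/Hb; exists 1%N; rewrite expr1.
have c'0 : c' != 0.
  apply/eqP => e0; move: Hc'; rewrite e0 mul0r => /eqP; rewrite expf_eq0 => /andP [_].
  by apply/negP.
exists (c' ^+ m), (s ^+ (k * m)); split; first exact: mcnz_pow.
rewrite exprM Hc' exprMn tofracM invfM mulrA divff ?mul1r //.
by rewrite tofrac_neq0 // pow_neq0.
Qed.

Lemma SL_C1 (A : idomainType) :
  (forall B : {fraction A} -> Prop, is_sublocalization B -> is_localization B) ->
  forall x : {fraction A},
      exists b : A, same_ideal (radical (colonA x)) (radical (principal b)).
Proof.
move=> SL x.
pose pw := fun (y s : A) => exists n, s = y ^+ n.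
pose F := fun C : {fraction A} -> Prop =>
  exists y, y != 0 /\ colonA x y /\ forall z, C z <-> locset (pw y) z.
pose B := fun z => forall C, F C -> C z.
have mc : forall y, y != 0 -> mult_closed_nz (pw y).
  move=> y y0; have [h1 h2] := pow_mult y; split => //; split => //.
  by move=> [n e]; move: (pow_neq0 n y0); rewrite -e eqxx.
have [T [Tmc HT]] : is_localization B.
  apply: SL; exists F; split; last by move=> z; split.
  by move=> C [y [y0 [_ HC]]]; exists (pw y); split; [exact: mc|exact: HC].
have Bx : B x.
  move=> C [y [y0 [[e He] HC]]]; apply/HC; exists e, y; split; first by exists 1%N; rewrite expr1.
  by rewrite -He [tofrac y * x]mulrC mulfK // tofrac_neq0.
have [a [t [Tt xe]]] := (HT x).1 Bx.
have t0 := mcnz_neq0 Tmc Tt.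
have Bt : B (tofrac t)^-1 := (HT _).2 (locset_inv Tt).
exists t => z; split.
- move=> [n In]; case: (eqVneq (z ^+ n) 0) => [zn0|zn0].
    by exists n, 0; rewrite mul0r.
  have := Bt (locset (pw (z ^+ n))).
  case.
    by exists (z ^+ n); split => //; split => //.
  move=> c [s [[k ->] e]].
  exists (n * k)%N, c; rewrite exprM; apply: tofrac_inj; rewrite tofracM.
  have -> : tofrac c = (tofrac t)^-1 * tofrac ((z ^+ n) ^+ k).
    by rewrite e divfK // tofrac_neq0 // pow_neq0.
  by rewrite mulrC mulVKf // tofrac_neq0.
- move=> [n [c Hc]]; exists n; exists (c * a).
  rewrite Hc xe !tofracM -mulrA; congr (_ * _); rewrite mulrC divfK // tofrac_neq0 //.
Qed.

Lemma principal_ideal (A : idomainType) (b : A) : is_ideal (principal b).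
Proof.
split; first by exists 0; rewrite mul0r.
split; first by move=> x y [c1 ->] [c2 ->]; exists (c1 + c2); rewrite mulrDl.
by move=> r x [c ->]; exists (r * c); rewrite mulrA.
Qed.

Lemma colon_ideal_ideal (A : idomainType) (J : A -> Prop) (a : A) :
  is_ideal J -> is_ideal (colon_ideal J a).
Proof.
move=> [J0 [JD JM]]; split; first by rewrite /colon_ideal mul0r.
split; first by move=> x y Jx Jy; rewrite /colon_ideal mulrDl; apply: JD.
by move=> r x Jx; rewrite /colon_ideal -mulrA; apply: JM.
Qed.

Lemma C2_C1 (A : idomainType) :
  (forall b : A, finitely_many_assoc (principal b)) ->
  (forall (b : A) (P : A -> Prop), associated_prime (principal b) P ->
       exists c : A, same_ideal P (radical (principal c))) ->
  forall x : {fraction A}, ~ inA x ->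
      exists b : A, same_ideal (radical (colonA x)) (radical (principal b)).
Proof.
move=> H C2 x nx.
have [a [d [d0 ex]]] := frac_decomp x.
pose I := colon_ideal (principal d) a.
have colE : forall r, colonA x r <-> I r by move=> r; rewrite ex; exact: colonA_frac.
have Iid : is_ideal I by apply: colon_ideal_ideal; exact: principal_ideal.
have [n [Ps HPs]] := H d.
pose cond := fun i => exists Q, same_ideal Q (Ps i) /\ associated_prime (principal d) Q /\
   (forall r, I r -> Q r).
have main : forall m, exists b, (forall i, (i < m)%N -> cond i -> Ps i b) /\
     (forall z, radical I z -> radical (principal b) z).
  elim => [|m [b [Hb1 Hb2]]].
    by exists 1; split => // z [k _]; exists k, (z ^+ k); rewrite mulr1.
  case: (classic (cond m)) => [[Q [QP [Qa IQ]]]|nc]; last first.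
    exists b; split => // i; rewrite ltnS leq_eqVlt => /orP [/eqP ->|]; first by move/nc.
    exact: Hb1.
  have [c Qc] := C2 _ _ Qa.
  exists (c * b); split.
    move=> i; rewrite ltnS leq_eqVlt => /orP [/eqP ->|lt] ci.
      by apply/QP; apply/Qc; exists 1%N, b; rewrite expr1 mulrC.
    have [Q' [Q'P [[a' [[[_ [_ Q'M]] _] _]] _]]] := ci.
    by apply/Q'P; apply: Q'M; apply/Q'P; apply: Hb1.
  move=> z [k Ik]; have [k1 [e1 He1]] := Hb2 z (ex_intro _ k Ik).
  have [k2 [e2 He2]] := (Qc (z ^+ k)).1 (IQ _ Ik).
  exists (k1 + k * k2)%N, (e1 * e2).
  by rewrite exprD exprM He1 He2; ring.
have [b [Hb1 Hb2]] := main n.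
exists b => z; split.
  by move=> [j /colE h]; apply: Hb2; exists j.
move=> [k [e He]]; apply: NNPP => nr.
have nI : forall j, ~ I (z ^+ j) by move=> j /colE h; apply: nr; exists j.
have [Q [Qmin nQz]] := min_prime_avoid Iid nI.
have Qa : associated_prime (principal d) Q by exists a.
have [i [lt QPs]] := HPs Q Qa.
have := Hb1 i lt (ex_intro _ Q (conj QPs (conj Qa (proj1 (proj2 Qmin))))).
move/QPs => Qb.
case: Qmin => Qp _; apply: nQz; apply: (prime_pow (n := k) Qp); rewrite He.
by case: Qp => [[_ [_ QM]] _]; apply: QM.
Qed.

Lemma C1_C2 (A : idomainType) :
  (forall b : A, finitely_many_assoc (principal b)) ->
  (forall x : {fraction A}, ~ inA x ->
      exists b : A, same_ideal (radical (colonA x)) (radical (principal b))) ->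
  (forall (b : A) (P : A -> Prop), associated_prime (principal b) P ->
       exists c : A, same_ideal P (radical (principal c))).
Proof.
move=> H C1 b0 P [a Pmin].
have [Pp [J0P Pm]] := Pmin.
have [[P0 [PD PM]] [nP1 PP]] := Pp.
case: (eqVneq b0 0) => [e0|b00].
  rewrite e0 in Pmin J0P Pm *.
  exists 0.
  case: (eqVneq a 0) => [ea|a0].
    by exfalso; apply: nP1; apply: J0P; exists 0; rewrite ea !mulr0.
  have Zp : is_prime_ideal (fun r : A => r = 0).
    split; first by split => //; split => [x y -> ->|r x ->]; rewrite ?addr0 ?mulr0.
    split; first by move/eqP; rewrite oner_eq0.
    by move=> x y /eqP; rewrite mulf_eq0 => /orP [/eqP ->|/eqP ->]; [left|right].
  have PZ := Pm _ Zp.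
  move=> z; split.
    move=> Pz; exists 1%N, 0; rewrite mulr0 expr1.
    apply: (PZ _ _ z Pz).
      by move=> r [c]; rewrite mulr0 => /eqP; rewrite mulf_eq0 (negbTE a0) orbF => /eqP.
    by move=> r ->.
  move=> [k [c]]; rewrite mulr0 => /eqP; rewrite expf_eq0 => /andP [_ /eqP ->] //.
have [n [Ps HPs]] := H b0.
have [u [nPu Hu]] : exists u, ~ P u /\ forall i, (i < n)%N ->
    (exists Q, same_ideal Q (Ps i) /\ is_ideal Q /\ ~ (forall r, Q r -> P r)) -> Ps i u.
  suff : forall m, exists u, ~ P u /\ forall i, (i < m)%N ->
    (exists Q, same_ideal Q (Ps i) /\ is_ideal Q /\ ~ (forall r, Q r -> P r)) -> Ps i u.
    by move/(_ n).
  elim => [|m [u [nPu Hu]]]; first by exists 1.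
  case: (classic (exists Q, same_ideal Q (Ps m) /\ is_ideal Q /\ ~ (forall r, Q r -> P r)))
    => [[Q [QPs [[_ [_ QM]] nsub]]]|nc]; last first.
    exists u; split => // i; rewrite ltnS leq_eqVlt => /orP [/eqP ->|]; first by move/nc.
    exact: Hu.
  have [v [Qv nPv]] : exists v, Q v /\ ~ P v.
    apply: NNPP => h; apply: nsub => r Qr; apply: NNPP => nPr; apply: h; by exists r.
  exists (u * v); split; first by case/PP.
  move=> i; rewrite ltnS leq_eqVlt => /orP [/eqP ->|lt] ci.
    by apply/QPs; apply: QM.
  have [Q' [Q'P [[_ [_ Q'M]] _]]] := ci.
  by apply/Q'P; rewrite mulrC; apply: Q'M; apply/Q'P; apply: Hu.
pose J := fun k => colon_ideal (principal b0) (a * u ^+ k).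
have Jid : forall k, is_ideal (J k).
  by move=> k; apply: colon_ideal_ideal; exact: principal_ideal.
have Jmono : forall k k' r, (k <= k')%N -> J k r -> J k' r.
  move=> k k' r le [c Hc]; exists (c * u ^+ (k' - k)).
  by rewrite -(subnKC le) exprD mulrA mulrA -[r * a * _]mulrA Hc subnKC //; ring.
have J0J : forall k r, colon_ideal (principal b0) a r -> J k r.
  by move=> k r [c Hc]; exists (c * u ^+ k); rewrite mulrA Hc; ring.
have powP : forall k, ~ P (u ^+ k) by move=> k /(prime_pow Pp).
have JP : forall k r, J k r -> P r.
  move=> k r [c Hc].
  have : P (r * u ^+ k) by apply: J0P; exists c; rewrite -Hc; ring.
  by case/PP => // /powP.
pose good := fun i K => forall Q, same_ideal Q (Ps i) -> minimal_prime_over (J K) Q -> ~ Q u.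
have goodN : forall i, exists N, forall K, (N <= K)%N -> good i K.
  move=> i; case: (classic (forall K, good i K)) => [h|h]; first by exists 0%N.
  have [K0 [Q0 [Q0P [Q0min Q0u]]]] : exists K0 Q0, same_ideal Q0 (Ps i) /\
      minimal_prime_over (J K0) Q0 /\ Q0 u.
    apply: NNPP => h'; apply: h => K Q QP Qmin Qu; apply: h'; exists K, Q; split => //.
  have [s [m [nQ0s Js]]] := min_prime_local (Jid K0) Q0min Q0u.
  exists (K0 + m)%N => K le Q QP Qmin Qu.
  have JKs : J K s.
    apply: (Jmono (K0 + m)%N) => //.
    have [c Hc] := Js; exists c; rewrite -Hc exprD; ring.
  have [_ [JQ _]] := Qmin.
  by apply: nQ0s; apply/Q0P; apply/QP; apply: JQ.
have [N HN] : exists N, forall i, (i < n)%N -> forall K, (N <= K)%N -> good i K.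
  suff : forall m, exists N, forall i, (i < m)%N -> forall K, (N <= K)%N -> good i K.
    by move/(_ n).
  elim => [|m [N1 HN1]]; first by exists 0%N.
  have [N2 HN2] := goodN m.
  exists (N1 + N2)%N => i; rewrite ltnS leq_eqVlt => /orP [/eqP ->|lt] K le.
    by apply: HN2; apply: leq_trans le; apply: leq_addl.
  by apply: HN1 => //; apply: leq_trans le; apply: leq_addr.
pose x' := tofrac (a * u ^+ N) / tofrac b0.
have colE : forall r, colonA x' r <-> J N r by move=> r; exact: colonA_frac.
have nx' : ~ inA x'.
  move=> [e He]; apply: nP1; apply: (JP N); apply/colE; exists e.
  by rewrite tofrac1 mul1r.
have [c Hc] := C1 x' nx'.
exists c => z; split.
  move=> Pz; apply/Hc; apply: NNPP => nr.
  have nJ : forall j, ~ J N (z ^+ j) by move=> j /colE h; apply: nr; exists j.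
  have [Q [Qmin nQz]] := min_prime_avoid (Jid N) nJ.
  have Qa : associated_prime (principal b0) Q by exists (a * u ^+ N).
  have [i [lt QPs]] := HPs Q Qa.
  have [Qp [JQ _]] := Qmin.
  case: (classic (forall r, Q r -> P r)) => [sub|nsub].
    apply: nQz; apply: (Pm Q Qp _ sub z Pz).
    by move=> r h; apply: JQ; apply: J0J.
  have Psu := Hu i lt (ex_intro _ Q (conj QPs (conj (proj1 Qp) nsub))).
  by apply: (HN i lt N (leqnn N) Q QPs Qmin); apply/QPs.
move/Hc => [j /colE h].
by apply: (prime_pow (n := j) Pp); apply: (JP N).
Qed.
Unset Implicit Arguments.

Theorem theorem2p5 (A : idomainType) :
  ((forall B : {fraction A} -> Prop, is_sublocalization B -> is_localization B) <->
   (forall x : {fraction A}, ~ inA x ->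
      exists b : A, same_ideal (radical (colonA x)) (radical (principal b))))
  /\
  ((forall b : A, finitely_many_assoc (principal b)) ->
   ((forall B : {fraction A} -> Prop, is_sublocalization B -> is_localization B) <->
    (forall (b : A) (P : A -> Prop), associated_prime (principal b) P ->
       exists c : A, same_ideal P (radical (principal c))))).
Proof.
split.
  split; first by move=> SL x _; exact: SL_C1 SL x.
  exact: C1_SL.
move=> H; split.
  by move=> SL; apply: C1_C2 H _ => x _; exact: SL_C1.
by move=> C2; apply: C1_SL; exact: C2_C1 H C2.
Qed.
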